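(* Let $f,g:(\mathbb{R}^n,0)\to(\mathbb{R}^p,0)$ be $C^\infty$ map-germs, $s:(\mathbb{R}^n,0)\to(\mathbb{R}^n,0)$ a germ of $C^\infty$ diffeomorphism and $M:(\mathbb{R}^n,0)\to(GL(p,\mathbb{R}),M(0))$ a $C^\infty$ map-germ with $f(x)=M(x)g(s(x))$. Let $F(x,\lambda)=f(x)-M(x)\lambda$ on $(\mathbb{R}^n\times\mathbb{R}^p_\lambda,(0,0))$ with values in $(\mathbb{R}^p_y,0)$, and suppose there are germs of bi-Lipschitz homeomorphisms $h(x,\lambda)=(h_1(x,\lambda),\lambda)$ of $(\mathbb{R}^n\times\mathbb{R}^p_\lambda,(0,0))$ and $H(y,\lambda)=(H_1(y,\lambda),\lambda)$ of $(\mathbb{R}^p_y\times\mathbb{R}^p_\lambda,(0,0))$ such that $H\circ(F,\pi)=(f,\pi)\circ h$, where $\pi(x,\lambda)=\lambda$. If the map-germ $(\mathbb{R}^p_\lambda,0)\to(\mathbb{R}^p_y,0)$, $\lambda\mapsto H_1(0,\lambda)$, is a germ of bi-Lipschitz homeomorphism, then the map-germ $(\mathbb{R}^n,0)\to(\mathbb{R}^n,0)$, $x\mapsto h_1(x,g(s(x)))$, is a germ of bi-Lipschitz homeomorphism.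
   Context: $\mathbb{R}^p_\lambda$ and $\mathbb{R}^p_y$ both denote $\mathbb{R}^p$, playing the role of parameter space and target space respectively. A bi-Lipschitz homeomorphism is a homeomorphism which is Lipschitz (i.e. $\|\varphi(x)-\varphi(y)\|\le c\|x-y\|$ for some $c>0$) and whose inverse is Lipschitz. *)

(* Defs.v *)
From Stdlib Require Import Reals.
From mathcomp Require Import all_boot.
Set Implicit Arguments. Unset Strict Implicit. Unset Printing Implicit Defensive.
Local Open Scope R_scope.

Definition vec (n : nat) := 'I_n -> R.
Definition vzero (n : nat) : vec n := fun _ => 0.
Arguments vzero n : clear implicits.
Definition vsub n (x y : vec n) : vec n := fun i => x i - y i.

Definition vnorm n (x : vec n) : R := sqrt (\big[Rplus/0]_(i < n) (x i * x i)).
Definition vdist n (x y : vec n) : R := vnorm (vsub x y).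

Definition pdist a b (z w : vec a * vec b) : R :=
  sqrt (Rsqr (vdist z.1 w.1) + Rsqr (vdist z.2 w.2)).

Definition mat (p : nat) := 'I_p -> 'I_p -> R.
Definition mulmv p (A : mat p) (v : vec p) : vec p :=
  fun i => \big[Rplus/0]_(j < p) (A i j * v j).
Definition invertible p (A : mat p) : Prop :=
  exists B : mat p, forall v, mulmv A (mulmv B v) = v /\ mulmv B (mulmv A v) = v.

Definition open_in {X : Type} (d : X -> X -> R) (U : X -> Prop) : Prop :=
  forall x, U x -> exists r, r > 0 /\ forall y, d x y < r -> U y.

Definition near0 n (P : vec n -> Prop) : Prop :=
  exists r, r > 0 /\ forall x, vdist x (vzero n) < r -> P x.
Definition near00 a b (P : vec a -> vec b -> Prop) : Prop :=
  exists r, r > 0 /\ forall x l, pdist (x, l) (vzero a, vzero b) < r -> P x l.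

Definition shift n (x : vec n) (i : 'I_n) (t : R) : vec n :=
  fun j => x j + (if j == i then t else 0).

Fixpoint Ck n (k : nat) (u : vec n -> R) (U : vec n -> Prop) : Prop :=
  match k with
  | O => forall x, U x -> forall eps, eps > 0 ->
           exists del, del > 0 /\ forall y, vdist y x < del -> Rabs (u y - u x) < eps
  | S k' => (forall x, U x -> forall eps, eps > 0 ->
           exists del, del > 0 /\ forall y, vdist y x < del -> Rabs (u y - u x) < eps)
           /\ exists D : 'I_n -> vec n -> R,
              (forall i x, U x -> derivable_pt_lim (fun t => u (shift x i t)) 0 (D i x))
              /\ forall i, Ck k' (D i) U
  end.

Definition smooth_on n m (f : vec n -> vec m) (U : vec n -> Prop) : Prop :=
  forall (j : 'I_m) (k : nat), Ck k (fun x => f x j) U.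

Definition smooth_germ n m (f : vec n -> vec m) : Prop :=
  exists U, open_in (@vdist n) U /\ U (vzero n) /\ smooth_on f U.

Definition smooth_mat_germ n p (M : vec n -> mat p) : Prop :=
  forall i j : 'I_p, smooth_germ (fun x (_ : 'I_1) => M x i j).

Definition diffeo_germ n (s : vec n -> vec n) : Prop :=
  s (vzero n) = vzero n /\
  exists (U V : vec n -> Prop) (t : vec n -> vec n),
    open_in (@vdist n) U /\ U (vzero n) /\ open_in (@vdist n) V /\ V (vzero n) /\
    smooth_on s U /\ smooth_on t V /\
    (forall x, U x -> V (s x) /\ t (s x) = x) /\
    (forall y, V y -> U (t y) /\ s (t y) = y).

Definition bilip_germ {X Y : Type} (dX : X -> X -> R) (dY : Y -> Y -> R)
    (x0 : X) (y0 : Y) (phi : X -> Y) : Prop :=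
  phi x0 = y0 /\
  exists (U : X -> Prop) (V : Y -> Prop) (c : R),
    open_in dX U /\ U x0 /\ open_in dY V /\ V y0 /\ c > 0 /\
    (forall y, V y <-> exists x, U x /\ phi x = y) /\
    (forall x x', U x -> U x' ->
        dY (phi x) (phi x') <= c * dX x x' /\ dX x x' <= c * dY (phi x) (phi x')).

(* Main.v *)
Require Import Defs.
From Stdlib Require Import Reals.
From mathcomp Require Import all_boot.
From HB Require Import structures.
From Stdlib Require Import Reals Lra Lia Psatz FunctionalExtensionality.
From mathcomp Require Import all_boot.
Set Implicit Arguments. Unset Strict Implicit.
Local Open Scope R_scope.
HB.instance Definition _ := Monoid.isComLaw.Build R 0 Rplus (fun x y z => esym (Rplus_assoc x y z)) Rplus_comm Rplus_0_l.

Lemma sum_le n (a b : 'I_n -> R) : (forall i, a i <= b i) ->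
  \big[Rplus/0]_(i < n) a i <= \big[Rplus/0]_(i < n) b i.
Proof. move=> H; apply: (big_ind2 (fun x y => x <= y)) => //; [lra| move=> *; lra]. Qed.

Lemma sum_ge0 n (a : 'I_n -> R) : (forall i, 0 <= a i) -> 0 <= \big[Rplus/0]_(i < n) a i.
Proof. move=> H; apply: (big_ind (fun x => 0 <= x)) => //; [lra| move=> *; lra]. Qed.

Lemma term_le_sum n (a : 'I_n -> R) k : (forall i, 0 <= a i) -> a k <= \big[Rplus/0]_(i < n) a i.
Proof. move=> H; rewrite (bigD1 k) //=.
have: 0 <= \big[Rplus/0]_(i < n | i != k) a i by apply: (big_ind (fun x => 0 <= x)) => //; [lra| move=> *; lra].
intro HH; set X := bigop _ _ _ in HH *; lra. Qed.

Lemma sum_split n (a b : 'I_n -> R) :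
  \big[Rplus/0]_(i < n) (a i + b i) = \big[Rplus/0]_(i < n) a i + \big[Rplus/0]_(i < n) b i.
Proof. exact: big_split. Qed.

Lemma sum_abs n (a : 'I_n -> R) : Rabs (\big[Rplus/0]_(i < n) a i) <= \big[Rplus/0]_(i < n) Rabs (a i).
Proof. apply: (big_ind2 (fun x y => Rabs x <= y)).
- rewrite Rabs_R0; lra.
- move=> x1 x2 y1 y2 h1 h2; have := Rabs_triang x1 y1; lra.
- move=> i _; lra. Qed.

Lemma sum_const_le n (a : 'I_n -> R) c : (forall i, a i <= c) -> \big[Rplus/0]_(i < n) a i <= INR n * c.
Proof. elim: n a => [|n IH] a H; first by rewrite big_ord0 /=; lra.
rewrite big_ord_recl S_INR. have := IH (fun i => a (lift ord0 i)) (fun i => H _). have := H ord0. lra. Qed.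

Definition l1 n (x : vec n) := \big[Rplus/0]_(i < n) Rabs (x i).

Lemma vnorm_ge0 n (x : vec n) : 0 <= vnorm x.
Proof. exact: sqrt_pos. Qed.

Lemma l1_ge0 n (x : vec n) : 0 <= l1 x.
Proof. apply: sum_ge0 => i; exact: Rabs_pos. Qed.

Lemma coord_le_norm n (x : vec n) i : Rabs (x i) <= vnorm x.
Proof. rewrite /vnorm -sqrt_Rsqr_abs; apply: sqrt_le_1_alt.
rewrite /Rsqr; apply: (@term_le_sum _ (fun j => x j * x j) i) => j; nra. Qed.

Lemma sq_le_l1 n (x : vec n) : \big[Rplus/0]_(i < n) (x i * x i) <= l1 x * l1 x.
Proof. rewrite /l1; elim: n x => [|n IH] x; first by rewrite !big_ord0; lra.
rewrite !big_ord_recl. have := IH (fun i => x (lift ord0 i)).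
have := @sum_ge0 _ (fun i => Rabs (x (lift ord0 i))) (fun i => Rabs_pos _).
move=> h1 h2; rewrite /= in h1.
set A := \big[Rplus/0]_(i < n) Rabs _ in h1 h2 *.
set B := \big[Rplus/0]_(i < n) (_ * _) in h2 *. have := Rabs_pos (x ord0). have : x ord0 * x ord0 = Rabs (x ord0) * Rabs (x ord0).
 by rewrite -Rabs_mult Rabs_right //; nra.
nra. Qed.

Lemma norm_le_l1 n (x : vec n) : vnorm x <= l1 x.
Proof. rewrite /vnorm. rewrite -(sqrt_square (l1 x)); last exact: l1_ge0.
apply: sqrt_le_1_alt; exact: sq_le_l1. Qed.

Lemma l1_le_norm n (x : vec n) : l1 x <= INR n * vnorm x.
Proof. apply: sum_const_le => i; exact: coord_le_norm. Qed.

Lemma vnorm_eq0 n (x : vec n) : vnorm x <= 0 -> x = vzero n.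
Proof. move=> H; apply: functional_extensionality => i; rewrite /vzero.
have := coord_le_norm x i; have := Rabs_pos (x i) => *.
have : Rabs (x i) = 0 by lra. move=> hh; case: (Req_dec (x i) 0) => // hne; have := Rabs_no_R0 _ hne; lra. Qed.

Lemma vsub0 n (x : vec n) : vsub x (vzero n) = x.
Proof. apply: functional_extensionality => i; rewrite /vsub /vzero; lra. Qed.

Lemma vdist0 n (x : vec n) : vdist x (vzero n) = vnorm x.
Proof. by rewrite /vdist vsub0. Qed.

Lemma vnorm_opp n (x : vec n) : vnorm (fun i => - x i) = vnorm x.
Proof. rewrite /vnorm; congr sqrt; apply: eq_bigr => i _; lra. Qed.

Lemma vdist_sym n (x y : vec n) : vdist x y = vdist y x.
Proof. rewrite /vdist -vnorm_opp; congr vnorm; apply: functional_extensionality => i; rewrite /vsub; lra. Qed.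

Lemma vdist0l n (x : vec n) : vdist (vzero n) x = vnorm x.
Proof. by rewrite vdist_sym vdist0. Qed.

Lemma vdist_ge0 n (x y : vec n) : 0 <= vdist x y.
Proof. exact: vnorm_ge0. Qed.

Lemma vdist_refl n (x : vec n) : vdist x x = 0.
Proof. rewrite /vdist /vnorm. rewrite (eq_bigr (fun _ => 0)); last by move=> i _; rewrite /vsub; ring.
rewrite big1_eq; exact: sqrt_0. Qed.

Lemma pdist_ge1 a b (z w : vec a * vec b) : vdist z.1 w.1 <= pdist z w.
Proof. rewrite /pdist -{1}(sqrt_Rsqr (vdist z.1 w.1)); last exact: vdist_ge0.
apply: sqrt_le_1_alt; have := Rle_0_sqr (vdist z.2 w.2); lra. Qed.

Lemma pdist_ge2 a b (z w : vec a * vec b) : vdist z.2 w.2 <= pdist z w.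
Proof. rewrite /pdist -{1}(sqrt_Rsqr (vdist z.2 w.2)); last exact: vdist_ge0.
apply: sqrt_le_1_alt; have := Rle_0_sqr (vdist z.1 w.1); lra. Qed.

Lemma pdist_le a b (z w : vec a * vec b) : pdist z w <= vdist z.1 w.1 + vdist z.2 w.2.
Proof. rewrite /pdist. have h1 := vdist_ge0 z.1 w.1; have h2 := vdist_ge0 z.2 w.2.
rewrite -(sqrt_Rsqr (vdist z.1 w.1 + vdist z.2 w.2)); last lra.
apply: sqrt_le_1_alt; rewrite /Rsqr; nra. Qed.

Lemma pdist_sym a b (z w : vec a * vec b) : pdist z w = pdist w z.
Proof. by rewrite /pdist vdist_sym (vdist_sym z.2). Qed.

Lemma fin_choice n (Q : 'I_n -> R -> R -> Prop) :
  (forall i, exists r K, 0 < r /\ Q i r K) ->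
  (forall i r K r' K', Q i r K -> 0 < r' -> r' <= r -> K <= K' -> Q i r' K') ->
  exists r K, 0 < r /\ forall i, Q i r K.
Proof.
move=> HQ Hm.
suff: forall k, (k <= n)%N -> exists r K, 0 < r /\ forall i : 'I_n, (i < k)%N -> Q i r K.
  by move=> /(_ n (leqnn n)) [r [K [hr H]]]; exists r, K; split => // i; apply: H.
elim=> [|k IH] hk; first by exists 1, 0; split => //; lra.
have hk' : (k <= n)%N by apply: ltnW.
case: (IH hk') => r [K [hr H]].
case: (HQ (Ordinal hk)) => r0 [K0 [hr0 H0]].
exists (Rmin r r0), (Rmax K K0); split; first by apply: Rmin_pos.
move=> i; rewrite ltnS leq_eqVlt => /orP [/eqP ei|lti].
- have -> : i = Ordinal hk by apply: val_inj.
  apply: (Hm _ r0 K0) => //; [exact: Rmin_pos|exact: Rmin_r|exact: Rmax_r].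
- apply: (Hm _ r K); [exact: H|exact: Rmin_pos|exact: Rmin_l|exact: Rmax_l].
Qed.

Lemma l1_sub n (x y : vec n) : l1 (vsub x y) <= l1 x + l1 y.
Proof. rewrite /l1 -sum_split; apply: sum_le => i; rewrite /vsub.
have := Rabs_triang (x i) (- y i); rewrite Rabs_Ropp /Rminus; lra. Qed.

Lemma vnorm_sub n (x y : vec n) : vnorm (vsub x y) <= INR n * (vnorm x + vnorm y).
Proof. have := norm_le_l1 (vsub x y); have := l1_sub x y.
have := l1_le_norm x; have := l1_le_norm y; lra. Qed.

Lemma mulmv_bound p (A : mat p) (v : vec p) B :
  (forall i j, Rabs (A i j) <= B) -> vnorm (mulmv A v) <= INR p * (INR p * (B * vnorm v)).
Proof. move=> HB. apply: Rle_trans (norm_le_l1 _) _.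
apply: sum_const_le => i; rewrite /mulmv.
apply: Rle_trans (sum_abs _) _. apply: sum_const_le => j.
rewrite Rabs_mult; apply: Rmult_le_compat; try exact: Rabs_pos; first exact: HB.
exact: coord_le_norm. Qed.

Lemma mvt_bound (phi dphi : R -> R) a b K :
  (forall t, Rmin a b <= t <= Rmax a b -> derivable_pt_lim phi t (dphi t) /\ Rabs (dphi t) <= K) ->
  Rabs (phi b - phi a) <= K * Rabs (b - a).
Proof.
move=> H.
have gen : forall a b, a < b -> (forall t, a <= t <= b -> derivable_pt_lim phi t (dphi t) /\ Rabs (dphi t) <= K) ->
   Rabs (phi b - phi a) <= K * Rabs (b - a).
  move=> a0 b0 hab H0.
  case: (MVT_cor2 phi dphi a0 b0 hab (fun c hc => proj1 (H0 c hc))) => c [-> hc].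
  rewrite Rabs_mult. apply: Rmult_le_compat_r; first exact: Rabs_pos.
  apply: (proj2 (H0 c _)); lra.
case: (Rtotal_order a b) => [hab|[<-|hab]].
- apply: gen => // t ht; apply: H; rewrite Rmin_left ?Rmax_right; lra.
- rewrite !Rminus_diag Rabs_R0; lra.
- rewrite -Rabs_Ropp -(Rabs_Ropp (b - a)) !Ropp_minus_distr.
  apply: gen => // t ht; apply: H; rewrite Rmin_right ?Rmax_left; lra.
Qed.

Lemma shift_shift n (z : vec n) i c t : shift (shift z i c) i t = shift z i (c + t).
Proof. apply: functional_extensionality => j; rewrite /shift; case: (j == i); ring. Qed.

Lemma shift0 n (z : vec n) i : shift z i 0 = z.
Proof. apply: functional_extensionality => j; rewrite /shift; case: (j == i); ring. Qed.

Lemma deriv_shift n (u : vec n -> R) z i c D :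
  derivable_pt_lim (fun t => u (shift (shift z i c) i t)) 0 D ->
  derivable_pt_lim (fun t => u (shift z i t)) c D.
Proof. move=> H eps heps; case: (H eps heps) => del Hd; exists del => h h0 hh.
have := Hd h h0 hh; rewrite !shift_shift Rplus_0_l Rplus_0_r //. Qed.

Lemma between_abs a b v : Rmin a b <= v <= Rmax a b -> Rabs v <= Rabs a + Rabs b.
Proof. rewrite /Rmin /Rmax /Rabs.
case: (Rle_dec a b); case: (Rcase_abs v); case: (Rcase_abs a); case: (Rcase_abs b); lra. Qed.

Lemma vnorm0 n : vnorm (vzero n) = 0.
Proof. by rewrite -{1}(vsub0 (vzero n)) -/(vdist _ _) vdist_refl. Qed.

Definition zpath n (x y : vec n) (k : nat) : vec n := fun j => if (j < k)%N then y j else x j.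

Lemma zpath_step n (x y : vec n) k (hk : (k < n)%N) :
  zpath x y k.+1 = shift (zpath x y k) (Ordinal hk) (y (Ordinal hk) - x (Ordinal hk)).
Proof. apply: functional_extensionality => j; rewrite /zpath /shift.
case: (eqVneq j (Ordinal hk)) => [->|ne] /=.
- by rewrite ltnn leqnn; ring.
- have : nat_of_ord j <> k by move=> e; move/eqP: ne; apply; apply: val_inj.
  rewrite ltnS leq_eqVlt; case: (ltngtP j k) => // _ _ /=; ring.
Qed.

Lemma zpath_pt_bound n (x y : vec n) k (i : 'I_n) t : nat_of_ord i = k ->
  Rmin 0 (y i - x i) <= t <= Rmax 0 (y i - x i) ->
  forall j, Rabs (shift (zpath x y k) i t j) <= Rabs (x j) + Rabs (y j).
Proof. move=> hik ht j; rewrite /shift /zpath.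
case: (eqVneq j i) => [->|ne].
- rewrite hik ltnn; apply: between_abs.
  move: ht; rewrite /Rmin /Rmax; case: (Rle_dec 0 _); case: (Rle_dec (x i)); lra.
- rewrite Rplus_0_r; have := Rabs_pos (x j); have := Rabs_pos (y j); case: (j < k)%N; lra.
Qed.

Lemma zpath0 n (x y : vec n) : zpath x y 0 = x.
Proof. by apply: functional_extensionality => j. Qed.

Lemma zpathn n (x y : vec n) : zpath x y n = y.
Proof. apply: functional_extensionality => j; by rewrite /zpath ltn_ord. Qed.

Lemma ck1_lip n (u : vec n -> R) U : open_in (@vdist n) U -> U (vzero n) -> Ck 1 u U ->
  exists r K, 0 < r /\ forall x y, vnorm x < r -> vnorm y < r -> Rabs (u y - u x) <= K * vdist y x.
Proof.
move=> hU hU0 [_ [D [HD HC]]].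
case: (hU _ hU0) => r0 [hr0 Hr0].
have [del [K [hdel HK]]] : exists del K, 0 < del /\ forall i z, vnorm z < del -> Rabs (D i z) <= K.
  have := @fin_choice n (fun i del K => forall z, vnorm z < del -> Rabs (D i z) <= K).
  case.
  - move=> i. case: (HC i (vzero n) hU0 1 Rlt_0_1) => d [hd Hd].
    exists d, (Rabs (D i (vzero n)) + 1); split => // z hz.
    have := Hd z; rewrite vdist0 => /(_ hz) h.
    have := Rabs_triang_inv (D i z) (D i (vzero n)). lra.
  - move=> i r K r' K' H hr' hrr hKK z hz; have := H z; lra.
  - move=> del [K [hdel H]]; by exists del, K.
set Rr := Rmin del r0.
have hRr : 0 < Rr by apply: Rmin_pos.
have hn := pos_INR n.
set r := Rr / (2 * INR n + 1).
have hr : 0 < r by apply: Rdiv_lt_0_compat; lra.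
have hr2 : INR n * (2 * r) < Rr.
  rewrite /r. apply: (Rmult_lt_reg_r (2 * INR n + 1)); first lra.
  field_simplify; lra.
exists r, (INR n * K); split => // x y hx hy.
have hvd := vdist_ge0 y x.
suff: forall k, (k <= n)%N -> Rabs (u (zpath x y k) - u x) <= INR k * (K * vdist y x).
  move=> /(_ n (leqnn n)); rewrite zpathn => h; nra.
elim=> [|k IH] hk.
  rewrite zpath0 Rminus_diag Rabs_R0 /=; lra.
have IH' := IH (ltnW hk).
rewrite (zpath_step x y hk) S_INR.
set i := Ordinal hk.
set z := zpath x y k.
set d := y i - x i.
have step : Rabs (u (shift z i d) - u z) <= K * Rabs (d - 0).
  have := @mvt_bound (fun t => u (shift z i t)) (fun t => D i (shift z i t)) 0 d K.
  rewrite shift0; apply => t ht.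
  have hw : vnorm (shift z i t) < Rr.
    apply: Rle_lt_trans (norm_le_l1 _) _.
    have : l1 (shift z i t) <= l1 x + l1 y.
      rewrite /l1 -sum_split; apply: sum_le => j; exact: zpath_pt_bound.
    have := l1_le_norm x; have := l1_le_norm y. nra.
  split.
  - apply: deriv_shift; apply: HD; apply: Hr0; rewrite vdist0l.
    have := Rmin_r del r0; rewrite -/Rr; lra.
  - apply: HK; have := Rmin_l del r0; rewrite -/Rr; lra.
have hd : Rabs (d - 0) <= vdist y x.
  rewrite Rminus_0_r; exact: (coord_le_norm (vsub y x) i).
have := Rabs_triang (u (shift z i d) - u z) (u z - u x).
have -> : u (shift z i d) - u z + (u z - u x) = u (shift z i d) - u x by ring.
have : K * Rabs (d - 0) <= K * vdist y x.
  apply: Rmult_le_compat_l => //. have := HK i (vzero n); have := Rabs_pos (D i (vzero n)).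
  rewrite vnorm0; lra.
rewrite -/z in IH'; nra.
Qed.

Lemma smooth_lip n m (F : vec n -> vec m) : smooth_germ F ->
  exists r K, 0 < r /\ 0 <= K /\ forall x y, vnorm x < r -> vnorm y < r -> vdist (F y) (F x) <= K * vdist y x.
Proof.
move=> [U [hU [hU0 hs]]].
have := @fin_choice m (fun j r K => 0 <= K /\ forall x y, vnorm x < r -> vnorm y < r ->
   Rabs (F y j - F x j) <= K * vdist y x).
case; last move=> r [K [hr HK]].
- move=> j; case: (ck1_lip hU hU0 (hs j 1%N)) => r [K [hr H]].
  exists r, (Rmax K 0); split => //; split; first exact: Rmax_r.
  move=> x y hx hy; apply: Rle_trans (H x y hx hy) _; apply: Rmult_le_compat_r; first exact: vdist_ge0.
  exact: Rmax_l.
- move=> j r K r' K' [hK H] hr' hrr hKK; split; first lra.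
  move=> x y hx hy; apply: Rle_trans (H x y _ _) _; try lra.
  apply: Rmult_le_compat_r; first exact: vdist_ge0. lra.
have hm := pos_INR m.
have hK0 := Rmax_r K 0.
exists r, (INR m * Rmax K 0); split => //; split; first nra.
move=> x y hx hy. apply: Rle_trans (norm_le_l1 _) _.
rewrite Rmult_assoc; apply: sum_const_le => j. apply: Rle_trans (proj2 (HK j) x y hx hy) _.
apply: Rmult_le_compat_r; [exact: vdist_ge0|exact: Rmax_l].
Qed.

Lemma smooth_lip0 n m (F : vec n -> vec m) : smooth_germ F -> F (vzero n) = vzero m ->
  exists r K, 0 < r /\ 0 <= K /\ (forall x y, vnorm x < r -> vnorm y < r -> vdist (F y) (F x) <= K * vdist y x)
     /\ forall x, vnorm x < r -> vnorm (F x) <= K * vnorm x.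
Proof.
move=> /smooth_lip [r [K [hr [hK H]]]] F0; exists r, K; do 3 split => //.
move=> x hx; have := H (vzero n) x; rewrite F0 !vdist0 vnorm0; apply => //.
Qed.

Lemma mat_bound n p (M : vec n -> mat p) : smooth_mat_germ M ->
  exists r B, 0 < r /\ 0 <= B /\ forall x, vnorm x < r -> forall i j, Rabs (M x i j) <= B.
Proof.
move=> sM.
have := @fin_choice p (fun i r B => forall x, vnorm x < r -> forall j, Rabs (M x i j) <= B).
case; last move=> r [B [hr HB]].
- move=> i.
  have := @fin_choice p (fun j r B => forall x, vnorm x < r -> Rabs (M x i j) <= B).
  case; last move=> r [B [hr HB]].
  + move=> j. case: (smooth_lip (sM i j)) => r [K [hr [hK H]]].
    exists r, (Rabs (M (vzero n) i j) + K * r); split => // x hx.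
    have := H (vzero n) x; rewrite vdist0 vnorm0 => /(_ hr hx) h.
    have := coord_le_norm (vsub (fun _ : 'I_1 => M x i j) (fun _ => M (vzero n) i j)) ord0.
    rewrite /vsub -/(vdist _ _) => h2.
    have := Rabs_triang_inv (M x i j) (M (vzero n) i j). nra.
  + move=> j r B r' B' H hr' hrr hBB x hx; have := H x; lra.
  + exists r, B; split => // x hx j; exact: HB.
- move=> i r B r' B' H hr' hrr hBB x hx j; have := H x _ j; lra.
exists r, (Rmax B 0); split => //; split; first exact: Rmax_r.
move=> x hx i j; apply: Rle_trans (HB i x hx j) _; exact: Rmax_l.
Qed.

Lemma pdist0l a b (x : vec a) (l : vec b) : pdist (vzero a, vzero b) (x, l) <= vnorm x + vnorm l.
Proof. apply: Rle_trans (pdist_le _ _) _; rewrite /= !vdist0l; lra. Qed.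

Lemma pdist0r a b (x : vec a) (l : vec b) : pdist (x, l) (vzero a, vzero b) <= vnorm x + vnorm l.
Proof. rewrite pdist_sym; exact: pdist0l. Qed.

Lemma pdist_refl a b (z : vec a * vec b) : pdist z z = 0.
Proof. by rewrite /pdist !vdist_refl Rsqr_0 Rplus_0_r sqrt_0. Qed.

Lemma l1_tri n (x y : vec n) : l1 y <= l1 x + INR n * vdist y x.
Proof. apply: Rle_trans (_ : l1 y <= l1 x + l1 (vsub y x)) _.
- rewrite /l1 -sum_split; apply: sum_le => i; rewrite /vsub.
  have := Rabs_triang (x i) (y i - x i). have -> : x i + (y i - x i) = y i by ring. lra.
- have := l1_le_norm (vsub y x); rewrite /vdist; lra. Qed.

Lemma l1_0 n : l1 (vzero n) = 0.
Proof. have := l1_le_norm (vzero n); rewrite vnorm0 Rmult_0_r; have := l1_ge0 (vzero n); lra. Qed.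

Lemma mul_lt_of_lt_div a b d : 0 < b -> d < a / b -> b * d < a.
Proof. move=> hb hd; apply: (Rmult_lt_reg_r (/ b)); first (apply: Rinv_0_lt_compat; lra).
rewrite Rmult_comm -Rmult_assoc Rinv_l; [|lra]. rewrite Rmult_1_l; exact: hd. Qed.

Unset Implicit Arguments.
Theorem lemma3p3 (n p : nat)
  (f g : vec n -> vec p) (s : vec n -> vec n) (M : vec n -> mat p)
  (h1 : vec n -> vec p -> vec n) (H1 : vec p -> vec p -> vec p) :
  smooth_germ f -> f (vzero n) = vzero p ->
  smooth_germ g -> g (vzero n) = vzero p ->
  diffeo_germ s ->
  smooth_mat_germ M -> near0 (fun x => invertible (M x)) ->
  near0 (fun x => f x = mulmv (M x) (g (s x))) ->
  bilip_germ (@pdist n p) (@pdist n p) (vzero n, vzero p) (vzero n, vzero p)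
    (fun z => (h1 z.1 z.2, z.2)) ->
  bilip_germ (@pdist p p) (@pdist p p) (vzero p, vzero p) (vzero p, vzero p)
    (fun z => (H1 z.1 z.2, z.2)) ->
  near00 (fun x l => H1 (vsub (f x) (mulmv (M x) l)) l = f (h1 x l)) ->
  bilip_germ (@vdist p) (@vdist p) (vzero p) (vzero p) (fun l => H1 (vzero p) l) ->
  bilip_germ (@vdist n) (@vdist n) (vzero n) (vzero n) (fun x => h1 x (g (s x))).
Proof.
move=> sf f0 sg g0 ds sM invM fMg bh bH ident bk.
case: (smooth_lip0 sf f0) => rf [Lf [hrf [hLf [Lipf bf]]]].
case: (smooth_lip0 sg g0) => rg [Lg [hrg [hLg [Lipg bg]]]].
have [s0 sgerm] : s (vzero n) = vzero n /\ smooth_germ s.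
  case: ds => s0 [U [V [t [hU [hU0 [_ [_ [hs _]]]]]]]]; split => //; exists U; do 2 split => //.
case: (smooth_lip0 sgerm s0) => rs [Ls [hrs [hLs [Lips bs]]]].
pose gs := fun x => g (s x).
have [rgs [Lgs [hrgs [hLgs [Lipgs bgs]]]]] : exists r K, 0 < r /\ 0 <= K /\
   (forall x y, vnorm x < r -> vnorm y < r -> vdist (gs y) (gs x) <= K * vdist y x) /\
   forall x, vnorm x < r -> vnorm (gs x) <= K * vnorm x.
  have hr : 0 < Rmin rs (rg / (Ls + 1)) by apply: Rmin_pos => //; apply: Rdiv_lt_0_compat; lra.
  have sm : forall x, vnorm x < Rmin rs (rg / (Ls + 1)) -> vnorm x < rs /\ vnorm (s x) < rg.
    move=> x hx; have m1 := Rmin_l rs (rg / (Ls + 1)); have m2 := Rmin_r rs (rg / (Ls + 1)).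
    have hxr : vnorm x < rs by lra.
    split => //; have := bs x hxr; have := vnorm_ge0 x.
    have : (Ls + 1) * vnorm x < rg.
      have : vnorm x < rg / (Ls + 1) by lra.
      move=> hh; apply: (Rmult_lt_reg_r (/ (Ls + 1))); first (apply: Rinv_0_lt_compat; lra).
      rewrite Rmult_comm -Rmult_assoc Rinv_l; lra.
    nra.
  exists (Rmin rs (rg / (Ls + 1))), (Lg * Ls); do 2 split => //; first nra; split.
  - move=> x y hx hy; case: (sm x hx) => hx1 hx2; case: (sm y hy) => hy1 hy2.
    rewrite /gs; apply: Rle_trans (Lipg _ _ hx2 hy2) _.
    have := Lips x y hx1 hy1; have := vdist_ge0 (s y) (s x); nra.
  - move=> x hx; case: (sm x hx) => hx1 hx2; rewrite /gs.
    apply: Rle_trans (bg _ hx2) _; have := bs x hx1; nra.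
have gs0 : gs (vzero n) = vzero p by rewrite /gs s0 g0.
case: (mat_bound sM) => rM [BM [hrM [hBM HM]]].
pose Cm := INR p * (INR p * BM).
have hCm : 0 <= Cm by have := pos_INR p; rewrite /Cm; nra.
have Mb : forall x l, vnorm x < rM -> vnorm (mulmv (M x) l) <= Cm * vnorm l.
  move=> x l hx; rewrite /Cm !Rmult_assoc; apply: mulmv_bound; exact: HM.
case: invM => rI [hrI HI].
case: fMg => rE [hrE HE].
case: bh => /= h00 [Uh [Vh [ch [oUh [Uh0 [oVh [Vh0 [hch [HVh Hh]]]]]]]]].
case: h00 => h00.
case: (oUh _ Uh0) => eh1 [heh1 Heh1]; case: (oVh _ Vh0) => eh2 [heh2 Heh2].
case: bH => _ [UH [VH [cH [oUH [UH0 [_ [_ [hcH [_ HH]]]]]]]]].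
case: (oUH _ UH0) => eH [heH HeH].
case: ident => rN [hrN HN].
case: bk => /= k0 [Uk [Vk [ck [oUk [Uk0 [oVk [Vk0 [hck [HVk Hk]]]]]]]]].
case: (oUk _ Uk0) => ek1 [hek1 Hek1]; case: (oVk _ Vk0) => ek2 [hek2 Hek2].
pose phi := fun x => h1 x (gs x).
have phi0 : phi (vzero n) = vzero n by rewrite /phi gs0.
pose A := (1 + Lgs) * (1 + ch).
have hA : 1 <= A by rewrite /A; nra.
pose m1 := Rmin (Rmin (Rmin rgs rE) (Rmin rI rM)) rf.
pose m2 := Rmin (Rmin eh1 rN) (Rmin ek1 rf).
have hm1 : 0 < m1 by rewrite /m1; repeat apply: Rmin_pos => //.
have hm2 : 0 < m2 by rewrite /m2; repeat apply: Rmin_pos => //.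
pose rho := Rmin m1 (m2 / A).
have hrho : 0 < rho by apply: Rmin_pos => //; apply: Rdiv_lt_0_compat; lra.
have good1 : forall x : vec n, vnorm x < rho -> [/\ vnorm x < rgs, vnorm x < rE, vnorm x < rI, vnorm x < rM & vnorm x < rf].
  move=> x hx; have := Rmin_l m1 (m2 / A); rewrite -/rho /m1.
  have := Rmin_l (Rmin (Rmin rgs rE) (Rmin rI rM)) rf; have := Rmin_r (Rmin (Rmin rgs rE) (Rmin rI rM)) rf.
  have := Rmin_l (Rmin rgs rE) (Rmin rI rM); have := Rmin_r (Rmin rgs rE) (Rmin rI rM).
  have := Rmin_l rgs rE; have := Rmin_r rgs rE; have := Rmin_l rI rM; have := Rmin_r rI rM.
  move=> *; split; lra.
have good2 : forall x : vec n, vnorm x < rho -> [/\ A * vnorm x < eh1, A * vnorm x < rN, A * vnorm x < ek1 & A * vnorm x < rf].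
  move=> x hx; have := Rmin_r m1 (m2 / A); rewrite -/rho => hh.
  have : A * vnorm x < m2.
    have : vnorm x < m2 / A by lra.
    move=> h; apply: (Rmult_lt_reg_r (/ A)); first (apply: Rinv_0_lt_compat; lra).
    rewrite Rmult_comm -Rmult_assoc Rinv_l; lra.
  rewrite /m2.
  have := Rmin_l (Rmin eh1 rN) (Rmin ek1 rf); have := Rmin_r (Rmin eh1 rN) (Rmin ek1 rf).
  have := Rmin_l eh1 rN; have := Rmin_r eh1 rN; have := Rmin_l ek1 rf; have := Rmin_r ek1 rf.
  move=> *; split; lra.
have lamb : forall x : vec n, vnorm x < rho -> vnorm (gs x) <= Lgs * vnorm x /\ Lgs * vnorm x <= A * vnorm x /\ vnorm x + vnorm (gs x) <= A * vnorm x.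
  move=> x hx; case: (good1 x hx) => hx1 ? ? ? ?; have := bgs x hx1; have := vnorm_ge0 x; rewrite /A.
  move=> hv hb; have h3 : 0 <= Lgs * ch * vnorm x by apply: Rmult_le_pos => //; apply: Rmult_le_pos; lra.
  have h4 : 0 <= ch * vnorm x by apply: Rmult_le_pos; lra.
  split => //. split; lra.
have G1 : forall x : vec n, vnorm x < rho -> f x = mulmv (M x) (gs x).
  move=> x hx; case: (good1 x hx) => ? ? ? ? ?; apply: HE; rewrite vdist0 //.
have G2 : forall x : vec n, vnorm x < rho -> Uh (x, gs x).
  move=> x hx; case: (good2 x hx) => ? ? ? ?; case: (lamb x hx) => ? [? ?].
  apply: Heh1; have := pdist0l x (gs x); lra.
have G3 : forall x : vec n, vnorm x < rho -> Uk (gs x).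
  move=> x hx; case: (good2 x hx) => ? ? ? ?; case: (lamb x hx) => ? [? ?].
  apply: Hek1; rewrite vdist0l; lra.
have G4 : forall x : vec n, vnorm x < rho -> H1 (vzero p) (gs x) = f (phi x).
  move=> x hx; case: (good2 x hx) => ? ? ? ?; case: (lamb x hx) => ? [? ?].
  have := HN x (gs x); rewrite -G1 // /vsub.
  have -> : (fun i => f x i - f x i) = vzero p by apply: functional_extensionality => i; rewrite /vzero; ring.
  apply; have := pdist0r x (gs x); lra.
have Lup : forall x x' : vec n, vnorm x < rho -> vnorm x' < rho ->
    vdist (phi x) (phi x') <= ch * (1 + Lgs) * vdist x x'.
  move=> x x' hx hx'. case: (Hh (x, gs x) (x', gs x') (G2 x hx) (G2 x' hx')) => /= hup _.
  have e1 := pdist_ge1 (h1 x (gs x), gs x) (h1 x' (gs x'), gs x'); rewrite /= in e1.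
  have e2 := pdist_le (x, gs x) (x', gs x'); rewrite /= in e2.
  case: (good1 x hx) => hx1 _ _ _ _; case: (good1 x' hx') => hx1' _ _ _ _.
  have e3 := Lipgs x' x hx1' hx1.
  have e4 := vdist_ge0 x x'.
  rewrite /phi. 
  have : ch * pdist (x, gs x) (x', gs x') <= ch * ((1 + Lgs) * vdist x x').
    apply: Rmult_le_compat_l; lra.
  lra.
have G5 : forall x : vec n, vnorm x < rho -> vnorm (phi x) <= A * vnorm x /\ vnorm (phi x) < rf.
  move=> x hx; have h0 : vnorm (vzero n) < rho by rewrite vnorm0.
  have := Lup x (vzero n) hx h0; rewrite phi0 !vdist0 => hh.
  have : ch * (1 + Lgs) * vnorm x <= A * vnorm x.
    apply: Rmult_le_compat_r; first exact: vnorm_ge0. rewrite /A; nra.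
  case: (good2 x hx) => _ _ _ ?; lra.
have Llow : forall x x' : vec n, vnorm x < rho -> vnorm x' < rho ->
    vdist x x' <= ch * (1 + ck * Lf) * vdist (phi x) (phi x').
  move=> x x' hx hx'. case: (Hh (x, gs x) (x', gs x') (G2 x hx) (G2 x' hx')) => /= _ hlo.
  have e1 := pdist_ge1 (x, gs x) (x', gs x'); rewrite /= in e1.
  have e2 := pdist_le (h1 x (gs x), gs x) (h1 x' (gs x'), gs x'); rewrite /= in e2.
  case: (Hk (gs x) (gs x') (G3 x hx) (G3 x' hx')) => _; rewrite G4 // G4 // => e3.
  have e4 := Lipf _ _ (proj2 (G5 x' hx')) (proj2 (G5 x hx)).
  have e5 := vdist_ge0 (phi x) (phi x').
  have e6 : vdist (gs x) (gs x') <= ck * Lf * vdist (phi x) (phi x').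
    apply: Rle_trans e3 _; rewrite Rmult_assoc; apply: Rmult_le_compat_l; lra.
  have : ch * pdist (h1 x (gs x), gs x) (h1 x' (gs x'), gs x') <= ch * ((1 + ck * Lf) * vdist (phi x) (phi x')).
    apply: Rmult_le_compat_l; first lra. rewrite /phi in e6 e5 *. lra.
  lra.
have Inv : exists r, 0 < r /\ forall y : vec n, vnorm y < r -> exists x, l1 x < rho /\ phi x = y.
  pose Cl := ck * Lf. pose Cx := ch * (1 + Cl).
  pose Ca := INR p * (Lf * Cx + Cm * Cl).
  pose Tot := 1 + Lf + Cl + Cx + Ca + INR n * Cx.
  have hCl : 0 <= Cl by rewrite /Cl; nra.
  have hCx : 0 <= Cx by rewrite /Cx; nra.
  have hnp := pos_INR p; have hnn := pos_INR n.
  have hCa : 0 <= Ca by rewrite /Ca; apply: Rmult_le_pos => //; nra.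
  have hnCx : 0 <= INR n * Cx by nra.
  have hTot : 1 <= Tot by rewrite /Tot; lra.
  pose m3 := Rmin (Rmin (Rmin rf ek2) (Rmin eh2 rN)) (Rmin eH rho).
  have hm3 : 0 < m3 by rewrite /m3; repeat apply: Rmin_pos => //.
  have m3le : m3 <= rf /\ m3 <= ek2 /\ m3 <= eh2 /\ m3 <= rN /\ m3 <= eH /\ m3 <= rho.
    rewrite /m3.
    have := Rmin_l (Rmin (Rmin rf ek2) (Rmin eh2 rN)) (Rmin eH rho);
    have := Rmin_r (Rmin (Rmin rf ek2) (Rmin eh2 rN)) (Rmin eH rho).
    have := Rmin_l (Rmin rf ek2) (Rmin eh2 rN); have := Rmin_r (Rmin rf ek2) (Rmin eh2 rN).
    have := Rmin_l rf ek2; have := Rmin_r rf ek2; have := Rmin_l eh2 rN; have := Rmin_r eh2 rN.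
    have := Rmin_l eH rho; have := Rmin_r eH rho.
    move=> *; repeat split; lra.
  case: m3le => m3rf [m3ek2 [m3eh2 [m3rN [m3eH m3rho]]]].
  exists (m3 / Tot); split; first by apply: Rdiv_lt_0_compat; lra.
  move=> y hy.
  have hv := vnorm_ge0 y.
  have hT : Tot * vnorm y < m3.
    apply: (Rmult_lt_reg_r (/ Tot)); first (apply: Rinv_0_lt_compat; lra).
    rewrite Rmult_comm -Rmult_assoc Rinv_l; lra.
  have cle : forall c, 0 <= c -> c <= Tot -> c * vnorm y <= Tot * vnorm y.
    move=> c hc hcT; apply: Rmult_le_compat_r => //.
  have hyrf : vnorm y < rf by have := cle 1 ltac:(lra) ltac:(lra); lra.
  have hfy := bf y hyrf.
  have hLfT := cle Lf hLf ltac:(rewrite /Tot; lra).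
  case: (proj1 (HVk (f y))).
    apply: Hek2; rewrite vdist0l; lra.
  move=> l [Ukl kl].
  have hl : vnorm l <= Cl * vnorm y.
    case: (Hk l (vzero p) Ukl Uk0) => _; rewrite kl k0 !vdist0 => h.
    apply: Rle_trans h _; rewrite /Cl Rmult_assoc; apply: Rmult_le_compat_l; lra.
  have hl0 := vnorm_ge0 l.
  have hClT := cle (1 + Cl) ltac:(lra) ltac:(rewrite /Tot; lra).
  case: (proj1 (HVh (y, l))).
    apply: Heh2; have := pdist0l y l; lra.
  move=> [x l'] [Uhx /= E]; case: E => hx1 hl'; subst l'.
  have hx : vnorm x <= Cx * vnorm y.
    case: (Hh (x, l) (vzero n, vzero p) Uhx Uh0) => /= _; rewrite hx1 h00 => h.
    have := pdist_ge1 (x, l) (vzero n, vzero p); rewrite /= vdist0 => h2.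
    have := pdist0r y l => h3.
    have : ch * pdist (y, l) (vzero n, vzero p) <= ch * ((1 + Cl) * vnorm y).
      apply: Rmult_le_compat_l; lra.
    rewrite /Cx; lra.
  have hx0 := vnorm_ge0 x.
  have hCxT := cle Cx hCx ltac:(rewrite /Tot; lra).
  have hxrho : vnorm x < rho by lra.
  case: (good1 x hxrho) => _ hxE hxI hxM hxf.
  have hl1x : l1 x < rho.
    have := l1_le_norm x; have : INR n * vnorm x <= INR n * (Cx * vnorm y) by apply: Rmult_le_compat_l.
    have := cle (INR n * Cx) hnCx ltac:(rewrite /Tot; lra). rewrite Rmult_assoc. lra.
  have hCxlT := cle (Cx + Cl) ltac:(lra) ltac:(rewrite /Tot; lra).
  have Hid := HN x l ltac:(have := pdist0r x l; lra).
  rewrite hx1 in Hid.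
  set a := vsub (f x) (mulmv (M x) l) in Hid.
  have ha : vnorm a <= Ca * vnorm y.
    apply: Rle_trans (vnorm_sub _ _) _.
    have e1 := bf x hxf; have e2 := Mb x l hxM.
    have e3 : Lf * vnorm x <= Lf * (Cx * vnorm y) by apply: Rmult_le_compat_l.
    have e4 : Cm * vnorm l <= Cm * (Cl * vnorm y) by apply: Rmult_le_compat_l.
    have -> : Ca * vnorm y = INR p * (Lf * (Cx * vnorm y) + Cm * (Cl * vnorm y)) by rewrite /Ca; ring.
    apply: Rmult_le_compat_l => //; lra.
  have hCalT := cle (Ca + Cl) ltac:(lra) ltac:(rewrite /Tot; lra).
  have hClT' := cle Cl hCl ltac:(rewrite /Tot; lra).
  have UHa : UH (a, l) by apply: HeH; have := pdist0l a l; lra.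
  have UH0l : UH (vzero p, l) by apply: HeH; have := pdist0l (vzero p) l; rewrite vnorm0; lra.
  case: (HH (a, l) (vzero p, l) UHa UH0l) => /= _; rewrite Hid kl pdist_refl Rmult_0_r => h.
  have := pdist_ge1 (a, l) (vzero p, l); rewrite /= vdist0 => h2.
  have a0 : a = vzero p by apply: vnorm_eq0; lra.
  have fxl : f x = mulmv (M x) l.
    apply: functional_extensionality => i.
    have := congr1 (fun v => v i) a0; rewrite /a /vsub /vzero /=; lra.
  have gsl : gs x = l.
    case: (HI x ltac:(rewrite vdist0; lra)) => B HB.
    rewrite -(proj2 (HB (gs x))) -(G1 x hxrho) fxl. exact: (proj2 (HB l)).
  exists x; split => //; rewrite /phi gsl //.
case: Inv => r [hr Inv].
pose cu := ch * (1 + Lgs). pose cl := ch * (1 + ck * Lf).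
have hcu : 0 <= cu by rewrite /cu; nra.
have hckLf : 0 <= ck * Lf by apply: Rmult_le_pos; lra.
have hcl : 0 <= cl by rewrite /cl; nra.
have hnn := pos_INR n.
change (bilip_germ (@vdist n) (@vdist n) (vzero n) (vzero n) phi).
split; first exact: phi0.
exists (fun x => l1 x < rho /\ l1 (phi x) < r), (fun y => l1 y < r), (cu + cl + 1).
split; [|split; [|split; [|split; [|split; [|split]]]]].
- move=> x [hx1 hx2].
  pose d1 := (rho - l1 x) / (INR n + 1). pose d2 := (r - l1 (phi x)) / (INR n * cu + 1).
  have hd1 : 0 < d1 by apply: Rdiv_lt_0_compat; lra.
  have hd2 : 0 < d2 by apply: Rdiv_lt_0_compat; nra.
  exists (Rmin d1 d2); split; first exact: Rmin_pos.
  move=> y hy; rewrite vdist_sym in hy.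
  have hy1 : vdist y x < d1 by have := Rmin_l d1 d2; lra.
  have hy2 : vdist y x < d2 by have := Rmin_r d1 d2; lra.
  have hd := vdist_ge0 y x.
  have e1 := @mul_lt_of_lt_div _ (INR n + 1) _ ltac:(lra) hy1.
  have e2 := @mul_lt_of_lt_div _ (INR n * cu + 1) _ ltac:(nra) hy2.
  have ly : l1 y < rho by have := l1_tri x y; nra.
  split => //.
  have hxr : vnorm x < rho by have := norm_le_l1 x; lra.
  have hyr : vnorm y < rho by have := norm_le_l1 y; lra.
  have := l1_tri (phi x) (phi y); have := Lup y x hyr hxr; rewrite -/cu => hL.
  have : INR n * vdist (phi y) (phi x) <= INR n * (cu * vdist y x) by apply: Rmult_le_compat_l.
  nra.
- by rewrite l1_0 phi0 l1_0.
- move=> y hy.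
  pose d1 := (r - l1 y) / (INR n + 1).
  have hd1 : 0 < d1 by apply: Rdiv_lt_0_compat; lra.
  exists d1; split => // z hz; rewrite vdist_sym in hz.
  have hd := vdist_ge0 z y.
  have e1 := @mul_lt_of_lt_div _ (INR n + 1) _ ltac:(lra) hz.
  have := l1_tri y z; nra.
- by rewrite /= l1_0.
- lra.
- move=> y; split.
  + move=> hy; have hyr : vnorm y < r by have := norm_le_l1 y; lra.
    case: (Inv y hyr) => x [hx e]; exists x; split => //; split => //; rewrite e; exact: hy.
  + move=> [x [hU e]]; rewrite -e; exact: (proj2 hU).
- move=> x x' [hx _] [hx' _].
  have hxr : vnorm x < rho by have := norm_le_l1 x; lra.
  have hxr' : vnorm x' < rho by have := norm_le_l1 x'; lra.
  have := Lup x x' hxr hxr'; have := Llow x x' hxr hxr'; rewrite -/cu -/cl.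
  have := vdist_ge0 x x'; have := vdist_ge0 (phi x) (phi x').
  move=> *; split; nra.
Qed.
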